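(* Let $(\Theta,\mathbf{Q},\leq)$ be a $\Theta$-projective system of size $t$ in an artin triangulated $R$-category $\mathcal{T}$, with triangles $K(i)\to Q(i)\to\Theta(i)\to K(i)[1]$. If $\mathrm{Hom}_\mathcal{T}(K(j)[2],\Theta(i))=0$ for all $i,j\in[1,t]$, then $(\Theta,\leq)$ is a $\Theta$-system of size $t$ in $\mathcal{T}$.
   Context: Artin triangulated $R$-category: triangulated, $R$ commutative artinian, Hom-sets finitely generated $R$-modules, $R$-bilinear composition, $R$-linear shift, Krull–Schmidt. $\mathfrak{F}(\mathcal{X})$: objects $M$ admitting distinguished triangles $M_{k-1}\to M_k\to X_k\to M_{k-1}[1]$ ($k=0,\dots,n$), $M_{-1}=0=X_0$, $M_n=M$, $X_k\in\mathcal{X}$ for $k\ge1$. A $\Theta$-projective system of size $t$: $\le$ a linear order on $[1,t]$; $\Theta(i)$ non-zero with $\mathrm{Hom}(\Theta(j),\Theta(i))=0$ for $j>i$; $Q(i)$ indecomposable with $Q=\bigoplus Q(i)$ satisfying $\mathrm{Hom}(Q,\Theta(j)[\pm1])=0$ for all $j$; for each $i$ a distinguished triangle $K(i)\to Q(i)\to\Theta(i)\to K(i)[1]$ with $K(i)\in\mathfrak{F}(\{\Theta(j):j>i\})$, $\mathrm{Hom}(K(i)[1],\Theta(i))=0$. A $\Theta$-system of size $t$: linear order $\le$ on $[1,t]$, indecomposable $\Theta(i)$, $\mathrm{Hom}(\Theta(j),\Theta(i))=0$ for $j>i$, $\mathrm{Hom}(\Theta(j),\Theta(i)[1])=0$ for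 $j\ge i$, $\mathrm{Hom}(\Theta(i),\Theta(j)[-1])=0$ for all $i,j$. *)

(* Defs.v *)
From HB Require Import structures.
From mathcomp Require Import all_boot all_order all_algebra.
Set Implicit Arguments.
Unset Strict Implicit.
Unset Printing Implicit Defensive.
Import GRing.Theory.
Local Open Scope ring_scope.

Definition is_ideal (R : comPzRingType) (I : R -> Prop) : Prop :=
  [/\ I 0, (forall x y, I x -> I y -> I (x + y)) &
      (forall r x, I x -> I (r * x))].

Definition artinian_ring (R : comPzRingType) : Prop :=
  forall I : nat -> R -> Prop,
    (forall n, is_ideal (I n)) ->
    (forall n x, I n.+1 x -> I n x) ->
    exists N, forall n, (N <= n)%N -> forall x, I n x <-> I N x.

Definition fin_gen_lmod (R : comPzRingType) (V : lmodType R) : Prop :=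
  exists s : seq V, forall v : V,
    exists c : 'I_(size s) -> R, v = \sum_(k < size s) c k *: s`_k.

Record TriData (R : comPzRingType) := {
  Obj : Type;
  Mor : Obj -> Obj -> lmodType R;
  idm : forall X, Mor X X;
  comp : forall X Y Z, Mor Y Z -> Mor X Y -> Mor X Z;
  sh : Obj -> Obj;
  shm : forall X Y, Mor X Y -> Mor (sh X) (sh Y);
  unsh : Obj -> Obj;
  dist : forall X Y Z, Mor X Y -> Mor Y Z -> Mor Z (sh X) -> Prop
}.
Arguments idm {R T} X : rename.
Arguments comp {R T X Y Z} g f : rename.
Arguments sh {R T} X : rename.
Arguments shm {R T X Y} f : rename.
Arguments unsh {R T} X : rename.
Arguments dist {R T X Y Z} u v w : rename.
Arguments Mor {R T} X Y : rename.

Section Defs.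
Variables (R : comPzRingType) (T : TriData R).

Definition isIso (X Y : Obj T) (f : Mor X Y) : Prop :=
  exists g : Mor Y X, comp g f = idm X /\ comp f g = idm Y.

Definition iso_obj (X Y : Obj T) : Prop := exists f : Mor X Y, isIso f.

Definition isZero (X : Obj T) : Prop := idm X = 0.

Definition hom_zero (X Y : Obj T) : Prop := forall f : Mor X Y, f = 0.

Definition is_dsum (n : nat) (A : 'I_n -> Obj T) (S : Obj T) : Prop :=
  exists (inj : forall k, Mor (A k) S) (proj : forall k, Mor S (A k)),
    (forall k, comp (proj k) (inj k) = idm (A k)) /\
    (forall k l, k != l -> comp (proj k) (inj l) = 0) /\
    \sum_(k < n) comp (inj k) (proj k) = idm S.

Definition is_biprod (A B S : Obj T) : Prop :=
  exists (i1 : Mor A S) (i2 : Mor B S) (p1 : Mor S A) (p2 : Mor S B),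
    [/\ comp p1 i1 = idm A, comp p2 i2 = idm B, comp p1 i2 = 0,
        comp p2 i1 = 0 & comp i1 p1 + comp i2 p2 = idm S].

Definition indecomposable (X : Obj T) : Prop :=
  ~ isZero X /\ forall A B : Obj T, is_biprod A B X -> isZero A \/ isZero B.

Definition local_end (X : Obj T) : Prop :=
  idm X != 0 /\ forall f : Mor X X, isIso f \/ isIso (idm X - f).

Definition tri_iso (X Y Z X' Y' Z' : Obj T)
    (u : Mor X Y) (v : Mor Y Z) (w : Mor Z (sh X))
    (u' : Mor X' Y') (v' : Mor Y' Z') (w' : Mor Z' (sh X')) : Prop :=
  exists (a : Mor X X') (b : Mor Y Y') (c : Mor Z Z'),
    [/\ isIso a, isIso b, isIso c &
        [/\ comp u' a = comp b u, comp v' b = comp c v &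
        comp w' c = comp (shm a) w]].

Definition linear_cat_axioms : Prop :=
  [/\ (forall (X Y Z W : Obj T) (h : Mor Z W) (g : Mor Y Z) (f : Mor X Y),
          comp h (comp g f) = comp (comp h g) f),
      (forall (X Y : Obj T) (f : Mor X Y), comp (idm Y) f = f /\ comp f (idm X) = f),
      (forall (X Y Z : Obj T) (g : Mor Y Z) (r : R) (f1 f2 : Mor X Y),
          comp g (r *: f1 + f2) = r *: comp g f1 + comp g f2),
      (forall (X Y Z : Obj T) (f : Mor X Y) (r : R) (g1 g2 : Mor Y Z),
          comp (r *: g1 + g2) f = r *: comp g1 f + comp g2 f) &
      ((exists Z0, isZero Z0) /\ forall A B : Obj T, exists S, is_biprod A B S)].

Definition shift_axioms : Prop :=
  [/\ (forall (X Y : Obj T) (r : R) (f g : Mor X Y), shm (r *: f + g) = r *: shm f + shm g),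
      (forall (X Y Z : Obj T) (g : Mor Y Z) (f : Mor X Y), shm (comp g f) = comp (shm g) (shm f)),
      (forall X : Obj T, shm (idm X) = idm (sh X)),
      (forall X Y : Obj T, bijective (@shm R T X Y)) &
      (* essentially surjective, with chosen inverse X[-1] *)
      (forall X : Obj T, iso_obj (sh (unsh X)) X)].

Definition TR1 : Prop :=
  [/\ (forall (X Y Z X' Y' Z' : Obj T) (u : Mor X Y) (v : Mor Y Z) (w : Mor Z (sh X))
          (u' : Mor X' Y') (v' : Mor Y' Z') (w' : Mor Z' (sh X')),
          dist u v w -> tri_iso u v w u' v' w' -> dist u' v' w'),
      (forall X Z0 : Obj T, isZero Z0 -> dist (idm X) (0 : Mor X Z0) (0 : Mor Z0 (sh X))) &
      (forall (X Y : Obj T) (u : Mor X Y), exists Z (v : Mor Y Z) (w : Mor Z (sh X)), dist u v w)].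

Definition TR2 : Prop :=
  forall (X Y Z : Obj T) (u : Mor X Y) (v : Mor Y Z) (w : Mor Z (sh X)),
    dist u v w <-> dist v w (- shm u).

Definition TR3 : Prop :=
  forall (X Y Z X' Y' Z' : Obj T) (u : Mor X Y) (v : Mor Y Z) (w : Mor Z (sh X))
    (u' : Mor X' Y') (v' : Mor Y' Z') (w' : Mor Z' (sh X'))
    (a : Mor X X') (b : Mor Y Y'),
    dist u v w -> dist u' v' w' -> comp u' a = comp b u ->
    exists c : Mor Z Z', comp v' b = comp c v /\ comp w' c = comp (shm a) w.

Definition TR4 : Prop :=
  forall (X Y Z Z' X' Y' : Obj T) (u : Mor X Y) (v : Mor Y Z)
    (j : Mor Y Z') (k : Mor Z' (sh X))
    (l : Mor Z X') (i : Mor X' (sh Y))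
    (m : Mor Z Y') (n : Mor Y' (sh X)),
    dist u j k -> dist v l i -> dist (comp v u) m n ->
    exists (f : Mor Z' Y') (g : Mor Y' X'),
      [/\ dist f g (comp (shm j) i),
          comp f j = comp m v, comp n f = k,
          comp g m = l & comp (shm u) n = comp i g].

Definition is_triangulated : Prop :=
  [/\ linear_cat_axioms, shift_axioms, TR1, TR2 & (TR3 /\ TR4)].

Definition krull_schmidt : Prop :=
  forall X : Obj T, exists n (A : 'I_n -> Obj T), (forall k, local_end (A k)) /\ is_dsum A X.

Definition artin_triangulated : Prop :=
  [/\ artinian_ring R, is_triangulated,
      (forall X Y : Obj T, fin_gen_lmod (Mor X Y)) & krull_schmidt].

(* F(P): objects with a finite filtration by distinguished triangles
   M_{k-1} -> M_k -> X_k -> M_{k-1}[1], k = 0..n, M_{-1} = 0 = X_0, M_n = M,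
   X_k in P for k >= 1.  Here Ms k stands for M_{k-1}. *)
Definition in_filt (P : Obj T -> Prop) (M : Obj T) : Prop :=
  exists (n : nat) (Ms : nat -> Obj T) (Xs : nat -> Obj T)
         (f : forall k, Mor (Ms k) (Ms k.+1))
         (g : forall k, Mor (Ms k.+1) (Xs k))
         (h : forall k, Mor (Xs k) (sh (Ms k))),
    [/\ isZero (Ms 0), isZero (Xs 0), Ms n.+1 = M,
        (forall k, (1 <= k <= n)%N -> P (Xs k)) &
        (forall k, (k <= n)%N -> dist (f k) (g k) (h k))].

End Defs.

Definition gtr (t : nat) (le : rel 'I_t) (j i : 'I_t) : bool := le i j && (j != i).

Definition linear_order (t : nat) (le : rel 'I_t) : Prop :=
  [/\ reflexive le, antisymmetric le, transitive le & total le].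

Definition theta_proj_system (R : comPzRingType) (T : TriData R) (t : nat)
    (le : rel 'I_t) (Theta Qi K : 'I_t -> Obj T) (Q : Obj T)
    (a : forall i, Mor (K i) (Qi i)) (b : forall i, Mor (Qi i) (Theta i))
    (c : forall i, Mor (Theta i) (sh (K i))) : Prop :=
  [/\ linear_order le,
      (forall i, ~ isZero (Theta i)),
      (forall i j, gtr le j i -> hom_zero (Theta j) (Theta i)),
      ((forall i, indecomposable (Qi i)) /\ is_dsum Qi Q /\
       (forall j, hom_zero Q (sh (Theta j)) /\ hom_zero Q (unsh (Theta j)))) &
      (forall i, [/\ dist (a i) (b i) (c i),
                     in_filt (fun M => exists j, gtr le j i /\ M = Theta j) (K i) &
                     hom_zero (sh (K i)) (Theta i)])].

Definition theta_system (R : comPzRingType) (T : TriData R) (t : nat)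
    (le : rel 'I_t) (Theta : 'I_t -> Obj T) : Prop :=
  [/\ linear_order le,
      (forall i, indecomposable (Theta i)),
      (forall i j, gtr le j i -> hom_zero (Theta j) (Theta i)),
      (forall i j, le i j -> hom_zero (Theta j) (sh (Theta i))) &
      (forall i j, hom_zero (Theta i) (unsh (Theta j)))].

Arguments theta_proj_system {R T t} le Theta Qi K Q a b c.
Arguments theta_system {R T t} le Theta.

(* Main.v *)
Require Import Defs.
From mathcomp Require Import all_boot all_order all_algebra.
Require Import Defs.
Set Implicit Arguments. Unset Strict Implicit. Unset Printing Implicit Defensive.
Import GRing.Theory.
Local Open Scope ring_scope.

Lemma lc_assoc (R : comPzRingType) (T : TriData R) (HL : linear_cat_axioms T)
  (X Y Z W : Obj T) (h : Mor Z W) (g : Mor Y Z) (f : Mor X Y) :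
  comp h (comp g f) = comp (comp h g) f.
Proof. by case: HL => A _ _ _ _; apply: A. Qed.
Lemma lc_id1 (R : comPzRingType) (T : TriData R) (HL : linear_cat_axioms T)
  (X Y : Obj T) (f : Mor X Y) : comp (idm Y) f = f.
Proof. by case: HL => _ A _ _ _; case: (A _ _ f). Qed.
Lemma lc_1id (R : comPzRingType) (T : TriData R) (HL : linear_cat_axioms T)
  (X Y : Obj T) (f : Mor X Y) : comp f (idm X) = f.
Proof. by case: HL => _ A _ _ _; case: (A _ _ f). Qed.
Lemma lc_Dr (R : comPzRingType) (T : TriData R) (HL : linear_cat_axioms T)
  (X Y Z : Obj T) (g : Mor Y Z) (f1 f2 : Mor X Y) : comp g (f1 + f2) = comp g f1 + comp g f2.
Proof. by case: HL => _ _ A _ _; have := A _ _ _ g 1 f1 f2; rewrite !scale1r. Qed.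
Lemma lc_Dl (R : comPzRingType) (T : TriData R) (HL : linear_cat_axioms T)
  (X Y Z : Obj T) (f : Mor X Y) (g1 g2 : Mor Y Z) : comp (g1 + g2) f = comp g1 f + comp g2 f.
Proof. by case: HL => _ _ _ A _; have := A _ _ _ f 1 g1 g2; rewrite !scale1r. Qed.
Lemma lc_0r (R : comPzRingType) (T : TriData R) (HL : linear_cat_axioms T)
  (X Y Z : Obj T) (g : Mor Y Z) : comp g (0 : Mor X Y) = 0.
Proof. have H := lc_Dr HL g (0 : Mor X Y) 0; rewrite addr0 in H. by apply: (addrI (comp g (0 : Mor X Y))); rewrite addr0 -H. Qed.
Lemma lc_0l (R : comPzRingType) (T : TriData R) (HL : linear_cat_axioms T)
  (X Y Z : Obj T) (f : Mor X Y) : comp (0 : Mor Y Z) f = 0.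
Proof. have H := lc_Dl HL f (0 : Mor Y Z) 0; rewrite addr0 in H. by apply: (addrI (comp (0 : Mor Y Z) f)); rewrite addr0 -H. Qed.
Lemma lc_Nr (R : comPzRingType) (T : TriData R) (HL : linear_cat_axioms T)
  (X Y Z : Obj T) (g : Mor Y Z) (f : Mor X Y) : comp g (- f) = - comp g f.
Proof. apply/eqP; rewrite -addr_eq0 -lc_Dr // addNr lc_0r //=. Qed.
Lemma lc_Nl (R : comPzRingType) (T : TriData R) (HL : linear_cat_axioms T)
  (X Y Z : Obj T) (g : Mor Y Z) (f : Mor X Y) : comp (- g) f = - comp g f.
Proof. apply/eqP; rewrite -addr_eq0 -lc_Dl // addNr lc_0l //=. Qed.
Lemma lc_Br (R : comPzRingType) (T : TriData R) (HL : linear_cat_axioms T)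
  (X Y Z : Obj T) (g : Mor Y Z) (f1 f2 : Mor X Y) : comp g (f1 - f2) = comp g f1 - comp g f2.
Proof. by rewrite lc_Dr // lc_Nr. Qed.
Lemma lc_Bl (R : comPzRingType) (T : TriData R) (HL : linear_cat_axioms T)
  (X Y Z : Obj T) (f : Mor X Y) (g1 g2 : Mor Y Z) : comp (g1 - g2) f = comp g1 f - comp g2 f.
Proof. by rewrite lc_Dl // lc_Nl. Qed.

Lemma tr_lin (R : comPzRingType) (T : TriData R) (HT : is_triangulated T) : linear_cat_axioms T.
Proof. by case: HT. Qed.
Lemma tr_sh (R : comPzRingType) (T : TriData R) (HT : is_triangulated T) : shift_axioms T.
Proof. by case: HT. Qed.

Lemma sh_D (R : comPzRingType) (T : TriData R) (HT : is_triangulated T)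
  (X Y : Obj T) (f g : Mor X Y) : shm (f + g) = shm f + shm g.
Proof. by case: (tr_sh HT) => A _ _ _ _; have := A _ _ 1 f g; rewrite !scale1r. Qed.
Lemma sh_0 (R : comPzRingType) (T : TriData R) (HT : is_triangulated T)
  (X Y : Obj T) : shm (0 : Mor X Y) = 0.
Proof. have H := sh_D HT (0 : Mor X Y) 0; rewrite addr0 in H.
by apply: (addrI (shm (0 : Mor X Y))); rewrite addr0 -H. Qed.
Lemma sh_N (R : comPzRingType) (T : TriData R) (HT : is_triangulated T)
  (X Y : Obj T) (f : Mor X Y) : shm (- f) = - shm f.
Proof. apply/eqP; rewrite -addr_eq0 -sh_D // addNr sh_0 //=. Qed.
Lemma sh_comp (R : comPzRingType) (T : TriData R) (HT : is_triangulated T)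
  (X Y Z : Obj T) (g : Mor Y Z) (f : Mor X Y) : shm (comp g f) = comp (shm g) (shm f).
Proof. by case: (tr_sh HT) => _ A _ _ _. Qed.
Lemma sh_id (R : comPzRingType) (T : TriData R) (HT : is_triangulated T)
  (X : Obj T) : shm (idm X) = idm (sh X).
Proof. by case: (tr_sh HT) => _ _ A _ _. Qed.
Lemma sh_inj (R : comPzRingType) (T : TriData R) (HT : is_triangulated T)
  (X Y : Obj T) (f g : Mor X Y) : shm f = shm g -> f = g.
Proof. case: (tr_sh HT) => _ _ _ A _; case: (A X Y) => h h1 _ E.
by rewrite -(h1 f) E h1. Qed.
Lemma sh_surj (R : comPzRingType) (T : TriData R) (HT : is_triangulated T)
  (X Y : Obj T) (f : Mor (sh X) (sh Y)) : exists g, f = shm g.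
Proof. case: (tr_sh HT) => _ _ _ A _; case: (A X Y) => h _ h2.
by exists (h f); rewrite h2. Qed.

Lemma zero_from (R : comPzRingType) (T : TriData R) (HT : is_triangulated T)
  (Z Y : Obj T) (f : Mor Z Y) : isZero Z -> f = 0.
Proof. move=> HZ; have HL := tr_lin HT.
by rewrite -(lc_1id HL f) HZ lc_0r. Qed.
Lemma zero_to (R : comPzRingType) (T : TriData R) (HT : is_triangulated T)
  (Z Y : Obj T) (f : Mor Y Z) : isZero Z -> f = 0.
Proof. move=> HZ; have HL := tr_lin HT.
by rewrite -(lc_id1 HL f) HZ lc_0l. Qed.
Lemma zero_sh (R : comPzRingType) (T : TriData R) (HT : is_triangulated T)
  (Z : Obj T) : isZero Z -> isZero (sh Z).
Proof. by rewrite /isZero => HZ; rewrite -sh_id // HZ sh_0. Qed.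

Lemma ex_zero (R : comPzRingType) (T : TriData R) (HT : is_triangulated T) :
  exists Z : Obj T, isZero Z.
Proof. by case: (tr_lin HT) => _ _ _ _ []. Qed.

Lemma tri_triv (R : comPzRingType) (T : TriData R) (HT : is_triangulated T)
  (W Z : Obj T) : isZero Z -> dist (0 : Mor Z W) (idm W) (0 : Mor W (sh Z)).
Proof. move=> HZ; have HZ' := zero_sh HT HZ.
have [_ _ [_ A _] B _] := HT.
apply/B; rewrite sh_0 // oppr0; exact: A.
Qed.

Lemma tr2 (R : comPzRingType) (T : TriData R) (HT : is_triangulated T)
  (X Y Z : Obj T) (u : Mor X Y) (v : Mor Y Z) (w : Mor Z (sh X)) :
  dist u v w -> dist v w (- shm u).
Proof. by have [_ _ _ B _] := HT; move/B. Qed.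

Lemma tr_shift (R : comPzRingType) (T : TriData R) (HT : is_triangulated T)
  (X Y Z : Obj T) (u : Mor X Y) (v : Mor Y Z) (w : Mor Z (sh X)) :
  dist u v w -> dist (- shm u) (- shm v) (- shm w).
Proof. by move/(tr2 HT)/(tr2 HT)/(tr2 HT). Qed.

Lemma E1 (R : comPzRingType) (T : TriData R) (HT : is_triangulated T)
  (X Y Z W : Obj T) (u : Mor X Y) (v : Mor Y Z) (w : Mor Z (sh X)) (g : Mor Y W) :
  dist u v w -> comp g u = 0 -> exists h : Mor Z W, g = comp h v.
Proof. move=> D Hg; have HL := tr_lin HT.
have [Z0 HZ] := ex_zero HT.
have [_ _ _ _ [A _]] := HT.
have [c [Hc _]] := A _ _ _ _ _ _ u v w _ _ _ (0 : Mor X Z0) g D (tri_triv HT W HZ)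
   ltac:(by rewrite lc_0r // Hg).
exists c; rewrite -Hc; symmetry; exact: lc_id1.
Qed.

Lemma tri_comp0 (R : comPzRingType) (T : TriData R) (HT : is_triangulated T)
  (X Y Z : Obj T) (u : Mor X Y) (v : Mor Y Z) (w : Mor Z (sh X)) :
  dist u v w -> comp v u = 0.
Proof. move=> D; have HL := tr_lin HT.
have [Z0 HZ] := ex_zero HT.
have [_ _ [_ B _] _ [A _]] := HT.
have [c [Hc _]] := A _ _ _ _ _ _ (idm X) (0 : Mor X Z0) 0 _ _ _ (idm X) u (B X Z0 HZ) D
   erefl.
by rewrite Hc lc_0r.
Qed.

Lemma E2 (R : comPzRingType) (T : TriData R) (HT : is_triangulated T)
  (X Y Z W : Obj T) (u : Mor X Y) (v : Mor Y Z) (w : Mor Z (sh X)) (g : Mor W Y) :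
  dist u v w -> comp v g = 0 -> exists h : Mor W X, g = comp u h.
Proof. move=> D Hg; have HL := tr_lin HT.
have [Z0 HZ] := ex_zero HT.
have [_ _ [_ B _] _ [A _]] := HT.
have T1 := tr2 HT (B W Z0 HZ).
have T2 := tr2 HT D.
have [c [_ Hc]] := A _ _ _ _ _ _ _ _ _ _ _ _ g (0 : Mor Z0 Z) T1 T2
   ltac:(by rewrite lc_0r // Hg).
have [h Eh] := sh_surj HT c; rewrite Eh in Hc.
exists h; apply: (sh_inj HT).
move: Hc; rewrite sh_comp // lc_Nl // lc_Nr // sh_id // lc_1id //.
by move/eqP; rewrite eqr_opp => /eqP ->.
Qed.

Lemma filt_contra (R : comPzRingType) (T : TriData R) (HT : is_triangulated T)
  (P : Obj T -> Prop) (M W : Obj T) :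
  in_filt P M -> (forall X, P X -> hom_zero X W) -> hom_zero M W.
Proof.
move=> [n [Ms [Xs [f [g [h [H0 HX0 HMn HP HD]]]]]]] HPW.
suff S : forall k, (k <= n.+1)%N -> hom_zero (Ms k) W by rewrite -HMn; exact: S.
elim=> [_|k IH Hk] phi; first by apply: (zero_from HT); exact: H0.
have Hk' : (k <= n)%N by [].
have [psi Epsi] := E1 HT (HD k Hk') (IH (ltnW Hk) (comp phi (f k))).
rewrite Epsi.
have -> : psi = 0.
  clear Epsi IH; case: k Hk Hk' phi psi => [|k] Hk Hk' phi psi; first by apply: (zero_from HT); exact: HX0.
  apply: HPW; apply: HP; by rewrite Hk'.
exact: (lc_0l (tr_lin HT)).
Qed.

Lemma filt_co (R : comPzRingType) (T : TriData R) (HT : is_triangulated T)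
  (P : Obj T -> Prop) (M Y : Obj T) :
  in_filt P M -> (forall X, P X -> hom_zero Y (sh X)) -> hom_zero Y (sh M).
Proof.
move=> [n [Ms [Xs [f [g [h [H0 HX0 HMn HP HD]]]]]]] HPW.
suff S : forall k, (k <= n.+1)%N -> hom_zero Y (sh (Ms k)) by rewrite -HMn; exact: S.
elim=> [_|k IH Hk] phi; first by apply: (zero_to HT); exact: (zero_sh HT H0).
have Hk' : (k <= n)%N by [].
have Hg : comp (- shm (g k)) phi = 0.
  clear IH; case: k Hk Hk' phi => [|k] Hk Hk' phi.
    by apply: (zero_to HT); exact: (zero_sh HT HX0).
  have Hz : hom_zero Y (sh (Xs k.+1)) by apply: HPW; apply: HP; rewrite Hk'.
  exact: Hz.
have [psi Epsi] := E2 HT (tr_shift HT (HD k Hk')) Hg.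
by rewrite Epsi (IH (ltnW Hk) psi) (lc_0r (tr_lin HT)).
Qed.

Lemma dsum_hom (R : comPzRingType) (T : TriData R) (HT : is_triangulated T)
  (n : nat) (A : 'I_n -> Obj T) (S X : Obj T) (k : 'I_n) :
  is_dsum A S -> hom_zero S X -> hom_zero (A k) X.
Proof.
move=> [inj [proj [H1 _]]] HS phi; have HL := tr_lin HT.
by rewrite -(lc_1id HL phi) -H1 (lc_assoc HL) (HS (comp phi (proj k))) (lc_0l HL).
Qed.

Lemma zsum_aux (V : zmodType) (x a b : V) : x - a - b = 0 -> a + b = x.
Proof. by move=> H; apply/eqP; rewrite eq_sym -subr_eq0 opprD addrA H. Qed.

Lemma split_mono (R : comPzRingType) (T : TriData R) (HT : is_triangulated T)
  (A X : Obj T) (u : Mor A X) (p : Mor X A) :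
  comp p u = idm A -> indecomposable X -> ~ isZero A -> comp u p = idm X.
Proof.
move=> Hpu [_ HX] HA; have HL := tr_lin HT.
have [_ _ [_ _ TR1c] _ _] := HT.
have [C [v [w D]]] := TR1c _ _ u.
have D1 := tr2 HT D; have D2 := tr2 HT D1.
have Hvu := tri_comp0 HT D.
have Huw := tri_comp0 HT D2.
have Hw : w = 0.
  rewrite -(lc_id1 HL w) -(sh_id HT) -Hpu (sh_comp HT) -(lc_assoc HL).
  by move: Huw; rewrite (lc_Nl HL) => /eqP; rewrite oppr_eq0 => /eqP ->; rewrite (lc_0r HL).
have Hw0 : comp w (idm C) = 0 by rewrite Hw (lc_0l HL).
have [s0 Es0] := E2 HT D1 Hw0.
set s := s0 - comp u (comp p s0).
have Hvs : comp v s = idm C.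
  rewrite /s (lc_Br HL) (lc_assoc HL) Hvu (lc_0l HL).
  by rewrite oppr0 addr0 -Es0.
have Hps : comp p s = 0.
  by rewrite /s (lc_Br HL) (lc_assoc HL) Hpu (lc_id1 HL) subrr.
set Dm := idm X - comp u p - comp s v.
have HDu : comp Dm u = 0.
  rewrite /Dm !(lc_Bl HL) (lc_id1 HL) -!(lc_assoc HL) Hpu Hvu (lc_1id HL) (lc_0r HL).
  by rewrite !(lc_0r HL) !subrr.
have [h Eh] := E1 HT D HDu.
have HDs : comp Dm s = 0.
  rewrite /Dm !(lc_Bl HL) (lc_id1 HL) -!(lc_assoc HL) Hps Hvs (lc_1id HL) (lc_0r HL).
  by rewrite -/s; apply/eqP; rewrite subr_eq0; apply/eqP; exact: subr0.
have Hh : h = 0 by rewrite -(lc_1id HL h) -Hvs (lc_assoc HL) -Eh.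
have HDm : Dm = 0 by rewrite Eh Hh (lc_0l HL).
have Hsum : comp u p + comp s v = idm X.
  exact: (zsum_aux HDm).
have [HA'|HC] := HX A C (ex_intro _ u (ex_intro _ s (ex_intro _ p (ex_intro _ v
   (And5 Hpu Hvs Hps Hvu Hsum))))).
  by case: HA.
by rewrite -Hsum (zero_from HT s HC) (lc_0l HL) addr0.
Qed.

Lemma iso_conj (R : comPzRingType) (T : TriData R) (HT : is_triangulated T)
  (A X : Obj T) (u : Mor A X) (p : Mor X A) (g : Mor A A) :
  comp p u = idm A -> comp u p = idm X -> isIso g -> isIso (comp u (comp g p)).
Proof.
move=> Hpu Hup [g' [H1 H2]]; have HL := tr_lin HT.
exists (comp u (comp g' p)); split.
  rewrite -!(lc_assoc HL) (lc_assoc HL p u) Hpu (lc_id1 HL) (lc_assoc HL g' g) H1 (lc_id1 HL).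
  exact: Hup.
rewrite -!(lc_assoc HL) (lc_assoc HL p u) Hpu (lc_id1 HL) (lc_assoc HL g g') H2 (lc_id1 HL).
exact: Hup.
Qed.

Lemma indec_local (R : comPzRingType) (T : TriData R) (HT : is_triangulated T)
  (HKS : krull_schmidt T) (X : Obj T) :
  indecomposable X -> forall f : Mor X X, isIso f \/ isIso (idm X - f).
Proof.
move=> HX f; have HL := tr_lin HT.
have [n [A [Hloc [inj [proj [H1 [_ Hsum]]]]]]] := HKS X.
case: n A Hloc inj proj H1 Hsum => [|m] A Hloc inj proj H1 Hsum.
  by case: HX.1; rewrite /isZero -Hsum big_ord0.
set u := inj ord0; set p := proj ord0.
have Hpu : comp p u = idm (A ord0) by exact: H1.
have HA : ~ isZero (A ord0) by case: (Hloc ord0) => /eqP.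
have Hup := split_mono HT Hpu HX HA.
have Ef : f = comp u (comp (comp p (comp f u)) p).
  by rewrite !(lc_assoc HL) Hup (lc_id1 HL) -(lc_assoc HL) Hup (lc_1id HL).
have [Hg|Hg] := (Hloc ord0).2 (comp p (comp f u)).
  by left; rewrite Ef; apply: iso_conj.
right; have := iso_conj HT Hpu Hup Hg.
rewrite (lc_Bl HL) (lc_id1 HL) (lc_Br HL) -Ef.
by rewrite Hup.
Qed.
Theorem corollary6p3 (R : comPzRingType) (T : TriData R)
    (HT : artin_triangulated T) (t : nat) (le : rel 'I_t)
    (Theta Qi K : 'I_t -> Obj T) (Q : Obj T)
    (a : forall i, Mor (K i) (Qi i)) (b : forall i, Mor (Qi i) (Theta i))
    (c : forall i, Mor (Theta i) (sh (K i))) :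
  theta_proj_system le Theta Qi K Q a b c ->
  (forall i j, hom_zero (sh (sh (K j))) (Theta i)) ->
  theta_system le Theta.
Proof.
case: HT => _ HT _ HKS.
have HL := tr_lin HT.
move=> [Hlo HnZ Hgt [HQind [HQ HQz]] Htri] H2.
have [Hrefl Hanti Htrans Htot] := Hlo.
have HQsh : forall i j, hom_zero (Qi i) (sh (Theta j)).
  by move=> i j; apply: (dsum_hom HT HQ); case: (HQz j).
have HQun : forall i j, hom_zero (Qi i) (unsh (Theta j)).
  by move=> i j; apply: (dsum_hom HT HQ); case: (HQz j).
have HQK : forall i j, hom_zero (Qi i) (sh (K j)).
  move=> i j; case: (Htri j) => _ Hf _.
  apply: (filt_co HT Hf) => X [l [_ ->]]; exact: HQsh.
have HKT : forall i j, le i j -> hom_zero (K j) (Theta i).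
  move=> i j Hij; case: (Htri j) => _ Hf _.
  apply: (filt_contra HT Hf) => X [l [Hlj ->]]; apply: Hgt.
  move: Hlj; rewrite /gtr => /andP [Hjl Hne]; apply/andP; split.
    exact: Htrans Hij Hjl.
  apply/eqP => Eli; move: Hne; rewrite Eli in Hjl *.
  by rewrite (Hanti i j) ?eqxx // Hij Hjl.
have Drot : forall i, dist (b i) (c i) (- shm (a i)).
  by move=> i; apply: (tr2 HT); case: (Htri i).
have Hinj : forall i (x : Mor (Theta i) (Theta i)), comp x (b i) = 0 -> x = 0.
  move=> i x Hx; have [h Eh] := E1 HT (Drot i) Hx.
  case: (Htri i) => _ _ Hz.
  by rewrite Eh (Hz h) (lc_0l HL).
split => //.
- move=> i; split; first exact: HnZ.
  move=> A B [i1 [i2 [p1 [p2 [E1' E2' E3 E4 E5]]]]].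
  set e := comp i1 p1.
  have Hee : comp e e = e.
    by rewrite /e (lc_assoc HL) -(lc_assoc HL i1 p1 i1) E1' (lc_1id HL).
  have [f Ef] := E2 HT (Drot i) (HQK i i (comp (c i) (comp e (b i)))).
  have [[f' [_ Hf']]|[f' [_ Hf']]] := indec_local HT HKS (HQind i) f.
    right.
    have Hb : b i = comp e (comp (b i) f').
      by rewrite (lc_assoc HL) Ef -(lc_assoc HL) Hf' (lc_1id HL).
    have He : idm (Theta i) - e = 0.
      apply: Hinj; rewrite (lc_Bl HL) (lc_id1 HL) {1 2}Hb.
      by rewrite [comp e (comp e _)](lc_assoc HL) Hee subrr.
    have He1 : e = idm (Theta i) by apply/eqP; rewrite eq_sym -subr_eq0 He.
    rewrite /isZero -E2' -(lc_id1 HL i2) -He1 /e (lc_assoc HL) (lc_assoc HL) E4.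
    by rewrite (lc_0l HL) (lc_0l HL).
  left.
  have Hb : b i = comp (idm (Theta i) - e) (comp (b i) f').
    rewrite (lc_assoc HL) (lc_Bl HL) (lc_id1 HL) Ef.
    have -> : b i - comp (b i) f = comp (b i) (idm (Qi i) - f) by rewrite (lc_Br HL) (lc_1id HL).
    by rewrite -(lc_assoc HL) Hf' (lc_1id HL).
  have He : e = 0.
    apply: Hinj; rewrite {1}Hb (lc_assoc HL) (lc_Br HL) (lc_1id HL) Hee subrr.
    exact: (lc_0l HL).
  have Hid : comp p1 (comp e i1) = idm A.
    by rewrite /e -(lc_assoc HL) E1' (lc_1id HL) E1'.
  by rewrite /isZero -Hid He (lc_0l HL) (lc_0r HL).
- move=> i j Hij phi.
  have [h Eh] := E1 HT (Drot j) (HQsh j i (comp phi (b j))).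
  have [h' Eh'] := sh_surj HT h.
  by rewrite Eh Eh' (HKT i j Hij h') (sh_0 HT) (lc_0l HL).
- move=> i j phi.
  have [h Eh] := E1 HT (Drot i) (HQun i j (comp phi (b i))).
  rewrite Eh.
  have [_ _ _ _ Hiso] := tr_sh HT.
  have [psi [psi' [Hp1 Hp2]]] := Hiso (Theta j).
  have Hh : shm h = 0.
    rewrite -(lc_id1 HL (shm h)) -Hp1 -(lc_assoc HL).
    by rewrite (H2 j i (comp psi (shm h))) (lc_0r HL).
  have -> : h = 0 by apply: (sh_inj HT); rewrite Hh (sh_0 HT).
  exact: (lc_0l HL).
Qed.
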